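(* Under the setting of Theorem 1 (with $\mathcal{S}$, $h$, $m$, $\delta=\operatorname{TV}(m,h)>0$, $n,k$, $\alpha\in[0,1]$ with $(1-\alpha)nk\in\mathbb{Z}$, $H_{long}=h^{\otimes nk}$ and $M_{long}=m^{\otimes (1-\alpha)nk}\otimes h^{\otimes \alpha nk}$), every measurable detector score $D:\mathcal{S}^{nk}\to\mathbb{R}$ satisfies $$\operatorname{AUROC}(D)\le 1-\tfrac{1}{2}(1-\delta)^{2nk(1-\alpha)}.$$
   Context: For probability measures $P,Q$, $\operatorname{TV}(P,Q)=\sup_A|P(A)-Q(A)|$ over measurable sets $A$. For a score $D$, with $X\sim M_{long}$ and $Y\sim H_{long}$ independent, $\operatorname{AUROC}(D)=\Pr(D(X)>D(Y))+\tfrac12\Pr(D(X)=D(Y))$, i.e. the area under the ROC curve (true positive rate on $M_{long}$ against false positive rate on $H_{long}$) of the detector that thresholds $D$. The long human text consists of $nk$ i.i.d. sequences from $h$; the long machine text consists of $(1-\alpha)nk$ independent sequences from $m$ and $\alpha nk$ independent sequences from $h$. *)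

(* Defs.v *)
From HB Require Import structures.
From mathcomp Require Import all_boot all_order all_algebra.
From mathcomp Require Import all_classical all_reals all_analysis.
Set Implicit Arguments. Unset Strict Implicit. Unset Printing Implicit Defensive.
Import Order.TTheory GRing.Theory Num.Theory.
Local Open Scope classical_set_scope.
Local Open Scope ring_scope.

Fixpoint Spow {dS : measure_display} (S : measurableType dS) (N : nat)
  : {d : measure_display & measurableType d} :=
  match N with
  | 0 => existT (fun d => measurableType d) _ unit
  | N'.+1 => existT (fun d => measurableType d) _ (S * projT2 (Spow S N'))%type
  end.

Definition SN {dS : measure_display} (S : measurableType dS) (N : nat) :
  measurableType (projT1 (Spow S N)) := projT2 (Spow S N).

Fixpoint prodP {dS : measure_display} (S : measurableType dS) (R : realType)
  (N : nat) (mu : nat -> probability S R) : probability (SN S N) R :=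
  match N return probability (SN S N) R with
  | 0 => [the probability _ _ of \d_tt]
  | N'.+1 => [the probability _ _ of (mu 0%N \x prodP N' (fun i => mu i.+1))%E]
  end.

Definition TV {d : measure_display} {T : measurableType d} {R : realType}
  (P Q : probability T R) : R :=
  sup [set r : R | exists A : set T, measurable A /\ r = `|fine (P A) - fine (Q A)|].

(** AUROC of score D with X ~ PM (machine), Y ~ PH (human) independent:
    Pr(D X > D Y) + 1/2 Pr(D X = D Y), computed under the product law PM (x) PH. *)
Definition AUROC {d : measure_display} {T : measurableType d} {R : realType}
  (PM PH : probability T R) (D : T -> R) : \bar R :=
  ((PM \x PH) [set xy | (D xy.2 < D xy.1)%R]
   + (2^-1)%:E * (PM \x PH) [set xy | D xy.1 = D xy.2])%E.

Definition Hlong {dS : measure_display} {S : measurableType dS} {R : realType}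
  (h : probability S R) (N : nat) : probability (SN S N) R :=
  prodP N (fun _ => h).

Definition Mlong {dS : measure_display} {S : measurableType dS} {R : realType}
  (m h : probability S R) (K N : nat) : probability (SN S N) R :=
  prodP N (fun i => if (i < K)%N then m else h).

(* Main.v *)
Require Import Defs.
From HB Require Import structures.
From mathcomp Require Import all_boot all_order all_algebra.
From mathcomp Require Import all_classical all_reals all_analysis.
From mathcomp Require Import measurable_realfun lebesgue_integral_definition.
From mathcomp Require Import lra ring.
Import Order.TTheory GRing.Theory Num.Theory.
Import numFieldNormedType.Exports.
Local Open Scope classical_set_scope.
Local Open Scope ring_scope.

Section S.
Local Open Scope ereal_scope.
Context d (T : measurableType d) (R : realType).

Lemma int_dom (mu nu : probability T R) (a : R) : (0 <= a)%R ->
  (forall A, measurable A -> a%:E * nu A <= mu A) ->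
  forall f : T -> \bar R, measurable_fun setT f -> (forall x, 0 <= f x) ->
  a%:E * \int[nu]_x f x <= \int[mu]_x f x.
Proof.
move=> a0 dom f mf f0.
pose ch := cadd (charge_of_finite_measure mu) (cscale (- a) (charge_of_finite_measure nu)).
pose chr := crestr0 ch (@measurableT _ T).
have pos : forall E, 0 <= chr E.
  move=> E; rewrite /chr /crestr0; case: ifPn => // /[!inE] mE.
  rewrite /crestr /= setIT /ch /cadd /cscale /charge_of_finite_measure /=.
  have -> : cscale (-a) (charge_of_finite_measure nu) E = (-a)%:E * nu E by [].
  rewrite EFinN mulNe sube_ge0 ?dom //.
  by rewrite fin_numM // fin_num_measure.
pose del := measure_of_charge chr pos.
pose an := mscale (NngNum a0) nu.
have -> : \int[mu]_x f x = \int[measure_add an del]_x f x.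
  apply: eq_measure_integral => A mA _; change (mu A = measure_add an del A); rewrite measure_addE /del /an /=.
  rewrite /measure_of_charge /chr /crestr0 mem_set // /crestr /= setIT /ch /cadd /cscale /charge_of_finite_measure /mscale /=.
  have -> : cscale (-a) (charge_of_finite_measure nu) A = (-a)%:E * nu A by [].
  by rewrite EFinN mulNe addeC subeK // fin_numM // fin_num_measure.
rewrite ge0_integral_measure_add // ge0_integral_mscale //.
by rewrite leeDl // integral_ge0.
Qed.
End S.

Section P.
Local Open Scope ereal_scope.
Context (R : realType).

Lemma prod_dom d1 d2 (T1 : measurableType d1) (T2 : measurableType d2)
  (mu1 nu1 : probability T1 R) (mu2 nu2 : probability T2 R) (a b : R) :
  (0 <= a)%R -> (0 <= b)%R ->
  (forall A, measurable A -> a%:E * nu1 A <= mu1 A) ->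
  (forall A, measurable A -> b%:E * nu2 A <= mu2 A) ->
  forall C, measurable C -> (a * b)%:E * (nu1 \x nu2) C <= (mu1 \x mu2) C.
Proof.
move=> a0 b0 h1 h2 C mC; rewrite /product_measure1 /=.
have mf := measurable_fun_xsection nu2 mC.
apply: (@le_trans _ _ (b%:E * \int[mu1]_x (nu2 \o xsection C) x)).
  rewrite (mulrC a b) EFinM -muleA.
  apply: lee_wpmul2l; first by rewrite lee_fin.
  apply: int_dom => // x; exact: measure_ge0.
rewrite -ge0_integralZl //.
apply: ge0_le_integral => //.
- by move=> x _; rewrite mule_ge0 // lee_fin.
- exact: emeasurable_funM.
- exact: measurable_fun_xsection.
- by move=> x _ /=; apply: h2; exact: measurable_xsection.
Qed.

Lemma prodP_dom dS (S : measurableType dS) (N : nat) :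
  forall (f g : nat -> probability S R) (a : nat -> R),
  (forall i, 0 <= a i)%R ->
  (forall i A, measurable A -> (a i)%:E * g i A <= f i A) ->
  forall C, measurable C -> (\prod_(i < N) a i)%:E * prodP N g C <= prodP N f C.
Proof.
elim: N => [|N IH] f g a a0 dom C mC.
  by rewrite big_ord0 mul1e.
rewrite big_ord_recl /=.
apply: prod_dom => //.
- by apply: prodr_ge0 => i _.
- exact: dom.
- move=> A mA.
  exact: (IH (fun i => f i.+1) (fun i => g i.+1) (fun i => a i.+1) (fun i => a0 i.+1) (fun i => dom i.+1) A mA).
Qed.

Lemma mset_lt dT (T : measurableType dT) (f g : T -> R) :
  measurable_fun setT f -> measurable_fun setT g -> measurable [set x | (f x < g x)%R].
Proof.
move=> mf mg.
have h := measurable_fun_ltr mf mg measurableT.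
have := h [set true] ltac:(by []).
rewrite setTI; suff -> : [set x | (f x < g x)%R] = (fun x => (f x < g x)%R) @^-1` [set true] by [].
by apply/seteqP; split => x /=.
Qed.

Lemma mset_eq dT (T : measurableType dT) (f g : T -> R) :
  measurable_fun setT f -> measurable_fun setT g -> measurable [set x | f x = g x].
Proof.
move=> mf mg.
have h := measurable_fun_eqr mf mg measurableT.
have := h [set true] ltac:(by []).
rewrite setTI; suff -> : [set x | f x = g x] = (fun x => (f x == g x)) @^-1` [set true] by [].
by apply/seteqP; split => x /= /eqP.
Qed.

Lemma auroc_dom dT (T : measurableType dT) (M H P : probability T R) (a : R)
  (a0 : (0 <= a)%R)
  (dM : forall A, measurable A -> a%:E * P A <= M A)
  (dH : forall A, measurable A -> a%:E * P A <= H A)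
  (D : T -> R) (mD : measurable_fun setT D) :
  AUROC M H D <= (1 - 2^-1 * a ^+ 2)%:E.
Proof.
rewrite /AUROC.
set A1 := [set xy : T * T | (D xy.2 < D xy.1)%R].
set A2 := [set xy : T * T | D xy.1 = D xy.2].
set A3 := [set xy : T * T | (D xy.1 < D xy.2)%R].
have m1 : measurable_fun setT (fun xy : T * T => D xy.1).
  exact: measurableT_comp.
have m2 : measurable_fun setT (fun xy : T * T => D xy.2).
  exact: measurableT_comp.
have mA1 : measurable A1 by exact: mset_lt.
have mA2 : measurable A2 by exact: mset_eq.
have mA3 : measurable A3 by exact: mset_lt.
have C3 : ~` A3 = A1 `|` A2.
  apply/seteqP; split => -[x y] /=; rewrite /A1 /A2 /A3 /=.
    by move/negP; rewrite -leNgt le_eqVlt => /predU1P[->|]; [right|left].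
  by case=> [/ltW h|->]; apply/negP; rewrite -leNgt.
have D12 : A1 `&` A2 = set0.
  apply/seteqP; split => -[x y] //=; rewrite /A1 /A2 /= => -[+ e].
  by rewrite e ltxx.
have sumQ : (M \x H) A1 + (M \x H) A2 = 1 - (M \x H) A3.
  by rewrite -probability_setC // C3 measureU.
have sumR : (P \x P) A1 + (P \x P) A2 = 1 - (P \x P) A3.
  by rewrite -probability_setC // C3 measureU.
have sym : (P \x P) A1 = (P \x P) A3.
  rewrite (@product_measure_unique _ _ _ _ _ P P (P \x^ P)); last 2 first.
  - by move=> A B mA mB; exact: (product_measure2E P P mA mB).
  - exact: mA1.
  rewrite /product_measure1 /product_measure2; apply: eq_integral => x _ /=.
  congr (P _); apply/seteqP; split => y; rewrite /xsection /ysection /= !inE //.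
have q2 := @prod_dom _ _ _ _ M P H P a a a0 a0 dM dH _ mA2.
have q3 := @prod_dom _ _ _ _ M P H P a a a0 a0 dM dH _ mA3.
move: sumQ sumR sym q2 q3.
rewrite -(@fineK _ ((M \x H) A1)) ?fin_num_measure //.
rewrite -(@fineK _ ((M \x H) A2)) ?fin_num_measure //.
rewrite -(@fineK _ ((M \x H) A3)) ?fin_num_measure //.
rewrite -(@fineK _ ((P \x P) A1)) ?fin_num_measure //.
rewrite -(@fineK _ ((P \x P) A2)) ?fin_num_measure //.
rewrite -(@fineK _ ((P \x P) A3)) ?fin_num_measure //.
set x1 := fine _; set x2 := fine _; set x3 := fine _.
set y1 := fine _; set y2 := fine _; set y3 := fine _.
move=> e1 e2 e3 h2 h3.
have {}e1 : (x1 + x2 = 1 - x3)%R by apply: EFin_inj; rewrite EFinD EFinB; exact: e1.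
have {}e2 : (y1 + y2 = 1 - y3)%R by apply: EFin_inj; rewrite EFinD EFinB; exact: e2.
have {}e3 : y1 = y3 by apply: EFin_inj.
rewrite -EFinM lee_fin in h2; rewrite -EFinM lee_fin in h3.
rewrite -EFinM -EFinD lee_fin.
have y2E : y2 = (1 - 2 * y3)%R by rewrite -e3 in e2; lra.
rewrite y2E in h2.
have aa : (0 <= a * a)%R by exact: mulr_ge0.
rewrite expr2.
nra.
all: by rewrite ge0_fin_numE ?measure_ge0 // (le_lt_trans (probability_le1 _ _)) ?ltey.
Qed.

Lemma pfine dT (T : measurableType dT) (Q : probability T R) A : measurable A ->
  [/\ (0 <= fine (Q A))%R, (fine (Q A) <= 1)%R & Q A = (fine (Q A))%:E].
Proof.
move=> mA.
have fA : Q A \is a fin_num.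
  by rewrite ge0_fin_numE ?measure_ge0 // (le_lt_trans (probability_le1 _ _)) ?ltey.
have e := fineK fA.
split => //.
- by rewrite fine_ge0 // measure_ge0.
- by rewrite -lee_fin e probability_le1.
Qed.

Lemma TV_ub dT (T : measurableType dT) (P Q : probability T R) A : measurable A ->
  (`|fine (P A) - fine (Q A)| <= TV P Q)%R.
Proof.
move=> mA; apply: sup_upper_bound; last by exists A.
split; first by exists (`|fine (P A) - fine (Q A)|)%R, A.
exists 1%R => _ [B [mB ->]].
have [p0 p1 _] := @pfine _ _ P _ mB; have [q0 q1 _] := @pfine _ _ Q _ mB.
rewrite ler_norml; apply/andP; split; lra.
Qed.

Lemma TV_le1 dT (T : measurableType dT) (P Q : probability T R) : (TV P Q <= 1)%R.
Proof.
apply: ge_sup; first by exists (`|fine (P set0) - fine (Q set0)|)%R, set0.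
move=> _ [B [mB ->]].
have [p0 p1 _] := @pfine _ _ P _ mB; have [q0 q1 _] := @pfine _ _ Q _ mB.
rewrite ler_norml; apply/andP; split; lra.
Qed.

Lemma mnorm_dom dT (T : measurableType dT) (mu : {measure set T -> \bar R})
  (Q : probability T R) A :
  (fine (mu setT))%:E * mnormalize mu Q A <= mu A.
Proof.
rewrite /mnormalize; case: ifPn => [/orP[/eqP -> | /eqP ->]|].
- by rewrite mul0e.
- by rewrite mul0e.
rewrite negb_or => /andP[c0 coo].
have fT : mu setT \is a fin_num by rewrite ge0_fin_numE // ltey.
rewrite muleCA -EFinM divff ?mule1 //.
by rewrite fine_eq0.
Qed.

Lemma common_part dS (S : measurableType dS) (m h : probability S R) :
  exists (c : probability S R) (g : R),
    [/\ (0 <= g)%R, (1 - TV m h <= g)%R,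
        (forall A, measurable A -> g%:E * c A <= m A) &
        (forall A, measurable A -> g%:E * c A <= h A)].
Proof.
pose nu := cadd (charge_of_finite_measure m) (copp (charge_of_finite_measure h)).
have [P [N [[mP posP] [mN negN] PN PN0]]] := Hahn_decomposition nu.
have nuE A : measurable A -> nu A = m A - h A by [].
have hm A : measurable A -> A `<=` P -> h A <= m A.
  move=> mA AP; have : 0 <= m A - h A by exact: (posP A mA AP).
  by rewrite sube_ge0 // fin_num_measure.
have mh A : measurable A -> A `<=` N -> m A <= h A.
  move=> mA AN; have : m A - h A <= 0 by exact: (negN A mA AN).
  by rewrite sube_le0 // fin_num_measure.
have split_ (mu : probability S R) A : measurable A -> mu A = mu (A `&` P) + mu (A `&` N).
  move=> mA; rewrite -measureU; first by rewrite -setIUr PN setIT.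
  - exact: measurableI.
  - exact: measurableI.
  by rewrite setIACA setIid PN0 setI0.
pose cm := measure_add (mrestr h mP) (mrestr m mN).
have cmE A : cm A = h (A `&` P) + m (A `&` N).
  by change (measure_add (mrestr h mP) (mrestr m mN) A = h (A `&` P) + m (A `&` N)); rewrite measure_addE.
pose c := mnormalize cm h.
exists c, (fine (cm setT)).
have cmA_ge0 A : 0 <= cm A by exact: measure_ge0.
have cdom A : measurable A -> (fine (cm setT))%:E * c A <= cm A.
  move=> mA; exact: mnorm_dom.
have cm_m A : measurable A -> cm A <= m A.
  move=> mA; rewrite cmE [leRHS](split_ m) //; apply: leeD2r.
  by apply: hm; [exact: measurableI | exact: subIsetr].
have cm_h A : measurable A -> cm A <= h A.
  move=> mA; rewrite cmE [leRHS](split_ h) //; apply: leeD2l.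
  by apply: mh; [exact: measurableI | exact: subIsetr].
split.
- by rewrite fine_ge0.
- have [_ _ eP] := @pfine _ _ m _ mP.
  have [_ _ eN] := @pfine _ _ m _ mN.
  have [_ _ hP] := @pfine _ _ h _ mP.
  have tv := @TV_ub _ _ m h _ mP.
  have one : (1 = fine (m P) + fine (m N))%R.
    apply: EFin_inj; rewrite EFinD -eP -eN.
    by have := split_ m setT measurableT; rewrite !setTI probability_setT => <-.
  rewrite cmE !setTI hP eN -EFinD /=.
  have := ler_norm (fine (m P) - fine (h P)); lra.
- by move=> A mA; apply: le_trans (cdom A mA) (cm_m A mA).
- by move=> A mA; apply: le_trans (cdom A mA) (cm_h A mA).
Qed.


Lemma prod_if (g : R) (K N : nat) :
  (\prod_(i < N) (if (i < K)%N then g else 1) = g ^+ (minn K N))%R.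
Proof.
elim: N => [|N IH]; first by rewrite big_ord0 minn0 expr0.
rewrite big_ord_recr /= IH; case: (ltnP N K) => hNK.
  by rewrite (minn_idPr hNK) exprSr.
by rewrite mulr1 (minn_idPl (leqW hNK)).
Qed.

End P.

Theorem theorem2 (R : realType) (dS : measure_display) (S : measurableType dS)
  (h m : probability S R) (n k : nat) (alpha : R) (K : nat)
  (hdelta : 0 < TV m h)
  (halpha0 : 0 <= alpha) (halpha1 : alpha <= 1)
  (hK : (1 - alpha) * (n * k)%:R = K%:R)
  (D : SN S (n * k) -> R) (mD : measurable_fun setT D) :
  (AUROC (Mlong m h K (n * k)) (Hlong h (n * k)) D
   <= (1 - 2^-1 * (1 - TV m h) ^+ (2 * K))%:E)%E.
Proof.
have KN : (K <= n * k)%N.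
  rewrite -(ler_nat R) -hK.
  have : (0 <= (n * k)%:R :> R) by exact: ler0n.
  nra.
have [c [g [g0 gTV dm dh]]] := @common_part R _ S m h.
pose gs := fun i : nat => if (i < K)%N then c else h.
pose as_ := fun i : nat => if (i < K)%N then g else 1%R.
have a0 : forall i, (0 <= as_ i)%R by move=> i; rewrite /as_; case: ifP.
have dM := @prodP_dom R _ S (n * k) (fun i => if (i < K)%N then m else h) gs as_ a0
  (fun i A mA => ltac:(rewrite /as_ /gs; case: ifP => _; [exact: dm | by rewrite mul1e])).
have dH := @prodP_dom R _ S (n * k) (fun _ => h) gs as_ a0
  (fun i A mA => ltac:(rewrite /as_ /gs; case: ifP => _; [exact: dh | by rewrite mul1e])).
rewrite /as_ prod_if (minn_idPl KN) in dM dH.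
apply: (le_trans (@auroc_dom R _ _ _ _ _ (g ^+ K) (exprn_ge0 K g0) dM dH D mD)).
rewrite lee_fin.
have tv1 := @TV_le1 R _ _ m h.
have hle : (1 - TV m h) ^+ (2 * K) <= g ^+ (2 * K).
  by apply: lerXn2r; rewrite ?nnegrE ?subr_ge0 //; apply: (le_trans _ gTV); rewrite subr_ge0.
rewrite -exprM mulnC.
lra.
Qed.
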